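(* Let $n\in\mathbb{N}$ and let $R$ be a ring such that $(r^n-1)((r-1)^n-1)=0$ for all $r\in R$. Then: (1) $\mathrm{char}(R)=|1\cdot\mathbb{Z}|$ is finite and $J(R)$ is a nil ideal; (2) if $n$ is odd, then $R$ is a reduced ring of characteristic $2$ and $J(R)=0$; (3) if $R$ is an algebra over a field $F$, then either $R$ is abelian or $\mathrm{char}(F)$ divides $n$.
   Context: All rings are associative with identity; $J(R)$ is the Jacobson radical and $\mathrm{char}(R):=|1\cdot\mathbb{Z}|$. A ring is reduced if it has no nonzero nilpotent elements, and abelian if all its idempotents are central. *)

(* Defs.v *)
From HB Require Import structures.
From mathcomp Require Import all_boot all_order all_algebra.
Set Implicit Arguments. Unset Strict Implicit. Unset Printing Implicit Defensive.
Import GRing.Theory.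
Local Open Scope ring_scope.

Definition pow_cond (R : nzRingType) (n : nat) : Prop :=
  forall r : R, (r ^+ n - 1) * ((r - 1) ^+ n - 1) = 0.

(* char(R) = |1 . Z| : c is the additive order of 1 (c = 0 if infinite),
   i.e. k%:R = 0 in R exactly when c divides k. *)
Definition is_char (R : nzRingType) (c : nat) : Prop :=
  forall k : nat, (k%:R == 0 :> R) = (c %| k)%N.

Definition is_nilpotent (R : nzRingType) (x : R) : Prop :=
  exists k : nat, x ^+ k = 0.

Definition reduced (R : nzRingType) : Prop :=
  forall x : R, is_nilpotent x -> x = 0.

Definition abelian_ring (R : nzRingType) : Prop :=
  forall e : R, e * e = e -> forall x : R, e * x = x * e.

Definition left_ideal (R : nzRingType) (I : R -> Prop) : Prop :=
  [/\ I 0, (forall x y, I x -> I y -> I (x + y)) & (forall r x, I x -> I (r * x))].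

Definition maximal_left_ideal (R : nzRingType) (I : R -> Prop) : Prop :=
  [/\ left_ideal I, ~ I 1 &
      forall J : R -> Prop, left_ideal J -> ~ J 1 ->
        (forall x, I x -> J x) -> forall x, J x -> I x].

Definition jacobson (R : nzRingType) (x : R) : Prop :=
  forall I : R -> Prop, maximal_left_ideal I -> I x.

(* Main.v *)
Require Import Defs.
From HB Require Import structures.
From mathcomp Require Import all_boot all_order all_algebra.
From mathcomp Require Import boolp classical_sets.
Import GRing.Theory.
Local Open Scope ring_scope.
Section Basic.
Variables (R : nzRingType) (n : nat).
Hypothesis hn : (0 < n)%N.
Hypothesis pc : pow_cond R n.

Lemma sqz_pow (y : R) k : y * y = 0 -> y ^+ k.+2 = 0.
Proof. by move=> yy; rewrite !exprSr -mulrA yy mulr0. Qed.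

Lemma onep_pow (y : R) k : y * y = 0 -> (1 + y) ^+ k = 1 + y *+ k.
Proof.
move=> yy; elim: k => [|k IH]; first by rewrite expr0 mulr0n addr0.
rewrite exprSr IH mulrDl mul1r mulrDr mulr1 mulrnAl yy mul0rn addr0 mulrSr.
by rewrite -addrA [y + _]addrC.
Qed.

Lemma sqz (y : R) : y * y = 0 -> y *+ n = 0.
Proof.
move=> yy; have := pc (1 + y).
rewrite onep_pow // ![1 + _]addrC !addrK.
case: n hn => // k _.
rewrite mulrBr mulr1 mulrnAl -exprS sqz_pow // mul0rn sub0r.
by move/eqP; rewrite oppr_eq0 => /eqP.
Qed.

Lemma natr_modc c k : c%:R = 0 :> R -> (k %% c)%:R = k%:R :> R.
Proof. by move=> hc; rewrite {2}(divn_eq k c) natrD natrM hc mulr0 add0r. Qed.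

Lemma char_exists : exists c, (0 < c)%N /\ is_char R c.
Proof.
have h3 : (1 < 3 ^ n)%N by apply: (leq_ltn_trans hn); apply: ltn_expl.
have h2 : (1 < 2 ^ n)%N by apply: (leq_ltn_trans hn); apply: ltn_expl.
pose m := ((3 ^ n).-1 * (2 ^ n).-1)%N.
have m0 : (0 < m)%N by rewrite muln_gt0 -!subn1 !subn_gt0 h2 h3.
have mR : m%:R = 0 :> R.
  have := pc 3%:R.
  have -> : (3%:R : R) - 1 = 2%:R by rewrite mulrSr addrK.
  rewrite -!natrX /m natrM.
  have e (a : nat) : (0 < a)%N -> a%:R - 1 = a.-1%:R :> R.
    by case: a => // a _; rewrite mulrSr addrK.
  by rewrite !e ?expn_gt0.
have ex : exists k, (0 < k)%N && (k%:R == 0 :> R) by exists m; rewrite m0 mR eqxx.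
case: (ex_minnP ex) => c /andP[c0 /eqP cR] cmin.
exists c; split => // k; apply/idP/idP.
  move/eqP => kR; case: (posnP (k %% c)%N) => [h|kp]; first by rewrite /dvdn h.
  have : (c <= (k %% c)%N)%N by apply: cmin; rewrite kp natr_modc // kR eqxx.
  by rewrite leqNgt ltn_pmod.
by move/dvdnP => [q ->]; rewrite natrM cR mulr0.
Qed.

Section Odd.
Hypothesis on : odd n.

Lemma two0 : 2%:R = 0 :> R.
Proof.
have := pc 0; rewrite expr0n eqn0Ngt hn /= sub0r -signr_odd on expr1.
rewrite mulrBr mulr1 mulrN1 opprK.
by [].
Qed.

Lemma char2 : is_char R 2.
Proof.
move=> k; rewrite -(natr_modc 2 k two0) /dvdn modn2.
by case: (odd k) => /=; rewrite ?eqxx ?oner_eq0.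
Qed.

Lemma sq0 (y : R) : y * y = 0 -> y = 0.
Proof.
move=> yy; have := sqz _ yy.
by rewrite -mulr_natr -(natr_modc 2 n two0) modn2 on mulr1.
Qed.

Lemma red : reduced R.
Proof.
move=> x [k xk].
suff H : forall j (z : R), z ^+ (2 ^ j) = 0 -> z = 0.
  apply: (H k); rewrite -(subnK (ltnW (ltn_expl k (ltnSn 1)))) exprD xk mulr0 //.
elim=> [|j IH] z; first by rewrite expn0 expr1.
move=> h; apply: IH; apply: sq0.
by rewrite -expr2 -exprM mulnC -expnS.
Qed.

End Odd.
End Basic.

Lemma part3 (n : nat) (hn : (0 < n)%N) (F : fieldType) (A : algType F) :
  pow_cond A n -> abelian_ring A \/ (forall c : nat, is_char F c -> (c %| n)%N).
Proof.
move=> pc; case: (boolP ((n%:R : F) == 0)) => [h|h].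
  by right=> c hc; rewrite -hc.
left=> e ee x.
have key (y : A) : y * y = 0 -> y = 0.
  move=> yy; have := @sqz _ _ hn pc _ yy; rewrite -scaler_nat => /eqP.
  by rewrite scaler_eq0 (negbTE h) /= => /eqP.
have fe : (1 - e) * e = 0 by rewrite mulrBl ee mul1r subrr.
have ef : e * (1 - e) = 0 by rewrite mulrBr ee mulr1 subrr.
have h1 : e * x * (1 - e) = 0.
  apply key; rewrite -!mulrA [(1 - e) * (e * _)]mulrA fe.
  by rewrite mul0r !mulr0.
have h2 : (1 - e) * x * e = 0.
  by apply key; rewrite -!mulrA [e * ((1 - e) * _)]mulrA ef mul0r !mulr0.
move: h1 h2; rewrite mulrBr mulr1 mulrBl mul1r.
rewrite mulrBl => /eqP; rewrite subr_eq0 => /eqP -> /eqP; rewrite subr_eq0 => /eqP ->.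
by rewrite -[RHS]mulrA ee.
Qed.
Section Per.
Variables (R : nzRingType) (n : nat).
Hypothesis hn : (0 < n)%N.
Hypothesis pc : pow_cond R n.
Variable c : nat.
Hypothesis c0 : (0 < c)%N.
Hypothesis cR : c%:R = 0 :> R.
Variable x : R.

Let P : {poly int} := ('X^n - 1) * (('X - 1%:P) ^+ n - 1).

Let Pmonic : P \is monic.
Proof.
rewrite /P monicMl ?monic_Xn_sub_1 //.
rewrite monicE lead_coefDl; first by rewrite -monicE; apply: monic_exp; apply: monicXsubC.
by rewrite size_polyN size_poly1 size_exp_XsubC.
Qed.

Let cfu : commr_rmorph (intr : int -> R) x := fun a => commr_int x a.
Local Notation hm := (horner_morph cfu).

Let hmP : hm P = 0.
Proof.
rewrite /P !(rmorphM, rmorphB, rmorphXn, rmorph1) /= horner_morphX.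
exact: pc.
Qed.

Let r k := Pdiv.Ring.rmodp ('X^k) P.

Let sr k : (size (r k) <= size P)%N.
Proof. by apply: ltnW; rewrite Pdiv.Ring.ltn_rmodp monic_neq0. Qed.

Let xk k : x ^+ k = \sum_(i < size P) ((r k)`_i)%:~R * x ^+ i.
Proof.
have -> : x ^+ k = hm ('X^k) by rewrite rmorphXn /= horner_morphX.
rewrite {1}(Pdiv.RingMonic.rdivp_eq Pmonic ('X^k)) rmorphD rmorphM /= hmP mulr0 add0r.
rewrite /hm /horner_morph (horner_coef_wide _ (leq_trans _ (sr k))).
  by apply: eq_bigr => i _; rewrite coef_map.
by rewrite /map_poly; apply: size_poly.
Qed.

Let intr_mod (z : int) : (z%:~R : R) = ((z %% c)%Z)%:~R.
Proof. by rewrite {1}(divz_eq z c) intrD intrM /= -[(c%:Z)%:~R]/(c%:R) cR mulr0 add0r. Qed.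

Lemma periodic : exists i j, (i < j)%N /\ x ^+ i = x ^+ j.
Proof.
pose T := {ffun 'I_(size P) -> 'I_c.+1}.
pose g (k : 'I_#|T|.+1) : T := [ffun i : 'I_(size P) => inord `|(((r k)`_i) %% c)%Z|%N].
have : ~~ injectiveb g.
  apply/negP => /injectiveP /leq_card; by rewrite card_ord ltnn.
case/injectivePn => k1 [k2 nk gk].
have e : x ^+ k1 = x ^+ k2.
  rewrite !xk; apply: eq_bigr => i _; congr (_ * _).
  have := congr1 (fun f : T => (f i : nat)) gk; rewrite /= !ffunE.
  have bnd (z : int) : (`|(z %% c)%Z|%N < c.+1)%N.
    rewrite ltnS ltnW // -ltz_nat gez0_abs ?modz_ge0 ?ltz_pmod //.
    by rewrite -lt0n c0.
  rewrite !inordK ?bnd // => h.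
  rewrite intr_mod [RHS]intr_mod.
  have ge (z : int) : (z %% c)%Z = `|(z %% c)%Z|%N.
    by rewrite gez0_abs // modz_ge0 // -lt0n c0.
  by rewrite ge [in RHS]ge h.
case: (ltngtP k1 k2) => h.
- by exists k1, k2.
- by exists k2, k1.
- by move: nk; rewrite (val_inj h) eqxx.
Qed.
End Per.
Lemma jac_mull (R : nzRingType) (x a : R) : jacobson x -> jacobson (a * x).
Proof. by move=> h I hI; case: (hI) => [[_ _ hm]] _ _; exact: hm (h I hI). Qed.

Lemma idem_J (R : nzRingType) (e : R) : e * e = e -> jacobson e -> e = 0.
Proof.
move=> ee he; case: (eqVneq e 0) => // ne; exfalso.
pose L := fun r : R => r * e = 0.
pose Q := fun A : R -> Prop => [/\ ~ A 1, (forall a b, A a -> A b -> A (a + b)),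
  (forall r a, A a -> A (r * a)) & (forall a, A a -> forall r, L r -> A r)].
have [] := @Zorn_bigcup R Q.
  move=> F FQ tot; split.
  - by case=> X FX X1; case: (FQ X FX).
  - move=> a b [X FX Xa] [Y FY Yb]; case: (tot X Y FX FY) => XY.
      by exists Y => //; case: (FQ Y FY) => _ hadd _ _; apply: hadd => //; apply: XY.
    by exists X => //; case: (FQ X FX) => _ hadd _ _; apply: hadd => //; apply: XY.
  - by move=> r a [X FX Xa]; exists X => //; case: (FQ X FX) => _ _ hm _; apply: hm.
  - by move=> a [X FX Xa] r Lr; exists X => //; case: (FQ X FX) => _ _ _ hl; apply: hl Xa r Lr.
move=> A [[A1 Aadd Amul AL] maxA].
have QL : Q L.
  split.
  - by rewrite /L mul1r; apply/eqP.
  - by move=> a b; rewrite /L mulrDl => -> ->; rewrite addr0.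
  - by move=> r a; rewrite /L -mulrA => ->; rewrite mulr0.
  - by [].
have LA : forall r, L r -> A r.
  case: (pselect (exists a, A a)) => [[a Aa]|none]; first exact: AL a Aa.
  exfalso; apply: (maxA L) => //; split.
    by move=> a Aa; exfalso; apply: none; exists a.
  by move=> LA; apply: none; exists 0; apply: LA; rewrite /L mul0r.
have mA : maximal_left_ideal A.
  split => //; first by split => //; apply: LA; rewrite /L mul0r.
  move=> J [J0 Jadd Jmul] J1 AJ y Jy.
  case: (pselect (A y)) => // nAy; exfalso; apply: (maxA J).
    by split => // JA; apply: nAy; apply: JA.
  by split => // a _ r Lr; apply: AJ; apply: LA.
have Ae := he A mA.
have A1e : A (1 - e) by apply: LA; rewrite /L mulrBl ee mul1r subrr.
by apply: A1; have := Aadd _ _ A1e Ae; rewrite subrK.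
Qed.

Lemma nilJ (R : nzRingType) (n : nat) (hn : (0 < n)%N) (pc : pow_cond R n) (x : R) :
  jacobson x -> is_nilpotent x.
Proof.
move=> hx; have [c [c0 hc]] := @char_exists _ _ hn pc.
have cR : c%:R = 0 :> R by apply/eqP; rewrite hc dvdnn.
have [i [j [ij e]]] := @periodic _ _ hn pc _ c0 cR x.
pose d := (j - i)%N.
have per : forall t, x ^+ (i + t * d) = x ^+ i.
  elim=> [|t IH]; first by rewrite mul0n addn0.
  by rewrite mulSn addnCA exprD IH -exprD subnK ?(ltnW ij) // -e.
have d0 : (0 < d)%N by rewrite subn_gt0.
pose m := (i.+1 * d)%N.
have mi : (i < m)%N := leq_pmulr _ d0.
have em : x ^+ m * x ^+ m = x ^+ m.
  rewrite -exprD -{1}(subnK (ltnW mi)) -addnA exprD (per i.+1) -exprD subnK //.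
  exact: ltnW.
have Jm : jacobson (x ^+ m).
  rewrite -(prednK (leq_ltn_trans (leq0n i) mi)) exprSr; exact: jac_mull.
by exists m; exact: idem_J em Jm.
Qed.

Theorem lemma2p2 (n : nat) (hn : (0 < n)%N) :
  (forall R : nzRingType, pow_cond R n ->
     ((exists c : nat, (0 < c)%N /\ is_char R c) /\
      (forall x : R, jacobson x -> is_nilpotent x)) /\
     (odd n ->
        [/\ reduced R, is_char R 2 & forall x : R, jacobson x -> x = 0]))
  /\
  (forall (F : fieldType) (A : algType F), pow_cond A n ->
     abelian_ring A \/ (forall c : nat, is_char F c -> (c %| n)%N)).
Proof.
split.
  move=> R pc; have nil := @nilJ R n hn pc.
  split; first by split => //; exact: char_exists hn pc.
  move=> on; have rd := @red R n hn pc on.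
  split => //; first exact: (@char2 R n hn pc on).
  by move=> x hx; apply: rd; exact: nil.
by move=> F A; exact: (@part3 n hn F A).
Qed.
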